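(* Let $t>0$ with $1/t$ a positive integer, let $n\ge 2t+\frac{9}{2t}+\frac92$, and let $s\ge 2$ be an integer such that $s/t$ is an integer and $n\ge s+\frac{s}{t}+1$. Then $$\lambda_1\big(D(K_1\vee(K_{n-1-\frac1t}+\tfrac1tK_1))\big)<\lambda_1\big(D(K_s\vee(K_{n-s-\frac st}+\tfrac stK_1))\big).$$
   Context: For a connected graph $G$, $D(G)$ is the distance matrix and $\lambda_1(D(G))$ its largest eigenvalue. $K_m$ is the complete graph, $+$ is disjoint union, $kK_1$ is $k$ isolated vertices, $\vee$ is the join (disjoint union plus all edges between the two parts). *)

(* Defs.v *)
From HB Require Import structures.
From mathcomp Require Import all_boot all_order all_algebra.
From mathcomp Require Import classical_sets reals.
Set Implicit Arguments. Unset Strict Implicit. Unset Printing Implicit Defensive.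
Import Order.TTheory GRing.Theory Num.Theory.
Local Open Scope ring_scope.

(* A simple graph on a finite vertex type T is an (irreflexive, symmetric)
   adjacency relation e : rel T. *)

Definition Kcomplete (m : nat) : rel 'I_m := fun x y => x != y.
Definition Kempty (k : nat) : rel 'I_k := fun _ _ => false.

Arguments Kcomplete m : clear implicits.
Arguments Kempty k : clear implicits.
Definition gunion (T1 T2 : finType) (e1 : rel T1) (e2 : rel T2) : rel (T1 + T2) :=
  fun u v => match u, v with
             | inl x, inl y => e1 x y
             | inr x, inr y => e2 x y
             | _, _ => false
             end.

Definition gjoin (T1 T2 : finType) (e1 : rel T1) (e2 : rel T2) : rel (T1 + T2) :=
  fun u v => match u, v with
             | inl x, inl y => e1 x y
             | inr x, inr y => e2 x y
             | _, _ => true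
             end.

Fixpoint walkk (T : finType) (e : rel T) (k : nat) (x y : T) : bool :=
  match k with
  | 0 => x == y
  | k'.+1 => [exists z, e x z && walkk e k' z y]
  end.

(* graph distance: least k with a walk of length k from x to y
   (for connected graphs such k < #|T| exists; otherwise the value is #|T|) *)
Definition gdist (T : finType) (e : rel T) (x y : T) : nat :=
  find (fun k => walkk e k x y) (iota 0 #|T|).

Definition distmx (R : nzRingType) (T : finType) (e : rel T) : 'M[R]_#|T| :=
  \matrix_(i, j) ((gdist e (enum_val i) (enum_val j))%:R : R).

Definition lambda1 (R : realType) (n : nat) (A : 'M[R]_n) : R :=
  sup [set a : R | eigenvalue A a].

Definition Gamb (a m b : nat) : rel ('I_a + ('I_m + 'I_b)) :=
  gjoin (Kcomplete a) (gunion (Kcomplete m) (Kempty b)).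
Arguments Gamb a m b : clear implicits.

(* Main.v *)
Require Import Defs.
From HB Require Import structures.
From mathcomp Require Import all_boot all_order all_algebra.
From mathcomp Require Import classical_sets reals.
From mathcomp Require Import polyrcf ring lra zify.
Import Order.TTheory GRing.Theory Num.Theory.
Local Open Scope ring_scope.

Definition dG {a m b : nat} (u v : 'I_a + ('I_m + 'I_b)) : nat :=
  if u == v then 0%N else if Gamb a m b u v then 1%N else 2%N.

Lemma walk1 (T : finType) (e : rel T) u v : walkk e 1 u v = e u v.
Proof.
by apply/existsP/idP => [[z /andP[h /eqP <-]]|h] //; exists v; rewrite h eqxx.
Qed.

Lemma walk1' (T : finType) (e : rel T) u v : [exists z, e u z && (z == v)] = e u v.
Proof. exact: walk1. Qed.

Lemma gdist_Gamb a m b u v : (0 < a)%N -> (3 <= a + (m + b))%N ->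
  gdist (Gamb a m b) u v = dG u v.
Proof.
move=> ha hN; rewrite /gdist /dG card_sum !card_sum !card_ord.
move: hN; case: (a + (m + b))%N => [|[|[|N]]] // _.
rewrite /= walk1'.
case: eqP => // /eqP uv; case: ifP => // euv.
have -> : [exists z, Gamb a m b u z && [exists z0, Gamb a m b z z0 && (z0 == v)]].
  apply/existsP; exists (inl (Ordinal ha)); rewrite walk1'.
  move: uv euv; case: u => [x|x]; case: v => [y|y] //=.
  by rewrite /Kcomplete => ->.
done.
Qed.

Definition pv {R : nzRingType} {a m b : nat} (X Y Z : R) (u : 'I_a + ('I_m + 'I_b)) : R :=
  match u with inl _ => X | inr (inl _) => Y | inr (inr _) => Z end.

Definition res {R : nzRingType} {a m b : nat} (X Y Z : R) (u : 'I_a + ('I_m + 'I_b)) : R :=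
  match u with
  | inl _ => (a%:R - 1) * X + m%:R * Y + b%:R * Z
  | inr (inl _) => a%:R * X + (m%:R - 1) * Y + 2 * b%:R * Z
  | inr (inr _) => a%:R * X + 2 * m%:R * Y + (2 * b%:R - 2) * Z end.

Lemma sum_neq (R : nzRingType) p (y : 'I_p) (c : R) :
  \sum_(x < p) (if x == y then 0 else c) = (p%:R - 1) * c.
Proof.
rewrite (bigD1 y) //= eqxx add0r.
rewrite (eq_bigr (fun _ => c)); last by move=> x /negbTE ->.
rewrite sumr_const cardC1 card_ord.
case: p y => [|p] [y hy] //=.
by rewrite mulrSr addrK mulr_natl.
Qed.

Lemma sum_cst (R : nzRingType) p (c : R) : \sum_(x < p) c = p%:R * c.
Proof. by rewrite sumr_const card_ord mulr_natl. Qed.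

Lemma sum_ifK (R : nzRingType) p (y : 'I_p) (X : R) (c : nat) :
  \sum_(i < p) X * (if i == y then 0%N else if Kcomplete p i y then 1%N else c)%:R = (p%:R - 1) * X.
Proof.
rewrite -(@sum_neq _ p y); apply: eq_bigr => i _; rewrite /Kcomplete.
by case: eqP => _ /=; rewrite ?mulr0 ?mulr1.
Qed.

Lemma sum_if2 (R : nzRingType) p (y : 'I_p) (X : R) :
  \sum_(i < p) X * (if i == y then 0%N else 2%N)%:R = (p%:R - 1) * (X * 2).
Proof.
rewrite -(@sum_neq _ p y); apply: eq_bigr => i _.
by case: eqP => _ /=; rewrite ?mulr0.
Qed.

Lemma sumG (R : comNzRingType) a m b (X Y Z : R) (w : 'I_a + ('I_m + 'I_b)) :
  \sum_u pv X Y Z u * (dG u w)%:R = res X Y Z w.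
Proof.
rewrite big_sumType /= big_sumType /=.
case: w => [y|[y|y]] /=; rewrite /dG /= !sum_cst.
- have E : forall i : 'I_a, (inl i == inl y :> 'I_a + ('I_m + 'I_b)) = (i == y) by [].
  under eq_bigr => i _ do rewrite E.
  rewrite sum_ifK; ring.
- have E : forall i : 'I_m, (inr (inl i) == inr (inl y) :> 'I_a + ('I_m + 'I_b)) = (i == y) by [].
  under eq_bigr => i _ do rewrite E.
  rewrite sum_ifK; ring.
- have E : forall i : 'I_b, (inr (inr i) == inr (inr y) :> 'I_a + ('I_m + 'I_b)) = (i == y) by [].
  under eq_bigr => i _ do rewrite E.
  rewrite sum_if2; ring.
Qed.

Definition vecG {R : nzRingType} (a m b : nat) (X Y Z : R) : 'rV[R]_#|{: 'I_a + ('I_m + 'I_b)}| :=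
  \row_i pv X Y Z (enum_val i).

Lemma vecG_mul (R : comNzRingType) a m b (X Y Z : R) (j : 'I_#|{: 'I_a + ('I_m + 'I_b)}|) : (0 < a)%N -> (3 <= a + (m + b))%N ->
  (vecG a m b X Y Z *m distmx R (Gamb a m b)) 0 j = res X Y Z (enum_val j).
Proof.
move=> ha hN; rewrite !mxE -sumG.
under eq_bigr => i _ do rewrite !mxE gdist_Gamb //.
rewrite -(big_enum_val (fun u => pv X Y Z u * (dG u (enum_val j))%:R)).
by apply: eq_bigl => u; rewrite inE.
Qed.

Lemma cw (R : realType) N (M : 'M[R]_N) (w : 'rV[R]_N) r a :
  (forall i j, 0 <= M i j) -> (forall i, 0 < w 0 i) ->
  (forall i, (w *m M) 0 i <= r * w 0 i) -> eigenvalue M a -> a <= r.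
Proof.
move=> M0 w0 wM /eigenvalueP [v hv vn0].
have [i0 hi0] : exists i0, v 0 i0 != 0.
  apply/existsP; apply: contraR vn0 => /existsPn h; apply/eqP/rowP => i.
  by rewrite mxE; apply/eqP; move: (h i); rewrite negbK.
pose F i := `|v 0 i| / w 0 i.
case: (@arg_maxP _ _ _ i0 xpredT F isT) => i _ hmax.
have c0 : 0 < F i.
  apply: (lt_le_trans _ (hmax i0 isT)); rewrite /F divr_gt0 //.
  by rewrite normr_gt0.
have vi0 : 0 < `|v 0 i| by move: c0; rewrite /F pmulr_lgt0 // invr_gt0.
have key : `|a| * `|v 0 i| <= r * `|v 0 i|.
  have e1 : `|a| * `|v 0 i| = `|(v *m M) 0 i| by rewrite hv mxE normrM.
  rewrite e1 mxE.
  apply: (le_trans (ler_norm_sum _ _ _)).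
  apply: (@le_trans _ _ (\sum_j F i * w 0 j * M j i)).
    apply: ler_sum => j _; rewrite normrM (ger0_norm (M0 j i)).
    apply: ler_wpM2r => //.
    have h := hmax j isT; rewrite /= in h.
    by move: h; rewrite /F ler_pdivrMr.
  under eq_bigr => j _ do rewrite -mulrA. rewrite -mulr_sumr.
  have -> : \sum_j w 0 j * M j i = (w *m M) 0 i by rewrite mxE.
  have Fw : F i * w 0 i = `|v 0 i| by rewrite /F divfK // gt_eqF.
  rewrite -Fw mulrCA.
  apply: ler_wpM2l; first exact: ltW.
  exact: wM.
have : `|a| <= r by rewrite -(ler_pM2r vi0).
by apply: le_trans; apply: ler_norm.
Qed.

Definition cub {R : nzRingType} (c2 c1 c0 x : R) := x^+3 + c2 * x^+2 + c1 * x + c0.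

Lemma cub_ivt (R : realType) (c2 c1 c0 lo hi : R) : lo <= hi ->
  cub c2 c1 c0 lo < 0 -> 0 < cub c2 c1 c0 hi ->
  exists x, [/\ lo < x, x < hi & cub c2 c1 c0 x = 0].
Proof.
move=> lohi hlo hhi.
pose p : {poly R} := 'X^3 + c2%:P * 'X^2 + c1%:P * 'X + c0%:P.
have pE x : p.[x] = cub c2 c1 c0 x by rewrite /p !hornerD !hornerCM !hornerXn hornerX hornerC.
have hp : p.[lo] * p.[hi] < 0 by rewrite !pE pmulr_llt0.
have [x] := @poly_ivtoo R p lo hi lohi hp.
rewrite in_itv /= => /andP[h1 h2] /rootP.
by rewrite pE => h3; exists x.
Qed.

Definition fG {R : nzRingType} (a m b x : R) :=
  cub (- (a + m + 2 * b - 4)) (a * b - 3 * a - 2 * m * b - 3 * m - 4 * b + 5)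
      (a * m * b + a * b - 2 * a - 2 * m * b - 2 * m - 2 * b + 2) x.

Definition XG {R : nzRingType} (m b x : R) := (x + 1) * (x + 2) - b * (x + m + 1).
Definition YG {R : nzRingType} (x : R) := (x + 1) * (x + 2).
Definition ZG {R : nzRingType} (m x : R) := (x + 1) * (x + m + 1).

Lemma res_eq (R : comNzRingType) a m b (x : R) (u : 'I_a + ('I_m + 'I_b)) :
  res (XG m%:R b%:R x) (YG x) (ZG m%:R x) u =
  x * pv (XG m%:R b%:R x) (YG x) (ZG m%:R x) u - fG a%:R m%:R b%:R x.
Proof. by case: u => [y|[y|y]]; rewrite /= /fG /cub /XG /YG /ZG; ring. Qed.

Lemma distmx_ge0 (R : realType) (T : finType) (e : rel T) i j : 0 <= distmx R e i j.
Proof. by rewrite mxE ler0n. Qed.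

Lemma eig_root (R : realType) a m b (x : R) : (0 < a)%N -> (0 < m)%N ->
  (3 <= a + (m + b))%N -> -1 < x -> fG a%:R m%:R b%:R x = 0 ->
  eigenvalue (distmx R (Gamb a m b)) x.
Proof.
move=> ha hm hN hx hf; apply/eigenvalueP.
exists (vecG a m b (XG m%:R b%:R x) (YG x) (ZG m%:R x)).
  apply/rowP => j; rewrite vecG_mul // res_eq hf subr0 !mxE.
  done.
apply/eqP => /rowP /(_ (enum_rank (inr (inl (Ordinal hm)) : 'I_a + ('I_m + 'I_b)))).
rewrite !mxE enum_rankK /= /YG => /eqP; apply/negP; rewrite mulf_eq0 negb_or.
by apply/andP; split; rewrite gt_eqF //; lra.
Qed.

Lemma eig_le (R : realType) a m b (x : R) : (0 < a)%N ->
  (3 <= a + (m + b))%N -> fG a%:R m%:R b%:R x = 0 ->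
  0 < XG m%:R b%:R x -> 0 < YG x -> 0 < ZG m%:R x ->
  forall e, eigenvalue (distmx R (Gamb a m b)) e -> e <= x.
Proof.
move=> ha hN hf hX hY hZ e he.
apply: (@cw _ _ _ (vecG a m b (XG m%:R b%:R x) (YG x) (ZG m%:R x)) x e _ _ _ he).
- exact: distmx_ge0.
- by move=> i; rewrite mxE; case: (enum_val i) => [y|[y|y]].
- by move=> i; rewrite vecG_mul // res_eq hf subr0 mxE.
Qed.

Lemma eig_bnd (R : realType) (T : finType) (e : rel T) a :
  eigenvalue (distmx R e) a -> a <= \sum_i \sum_j distmx R e i j.
Proof.
move=> he; apply: (@cw _ _ _ (const_mx 1) _ a _ _ _ he).
- exact: distmx_ge0.
- by move=> i; rewrite mxE.
move=> i; rewrite mxE mxE mulr1.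
apply: ler_sum => j _; rewrite mxE mul1r.
rewrite (bigD1 i) //= lerDl; apply: sumr_ge0 => k _; exact: distmx_ge0.
Qed.

Lemma fG_2N (R : realType) (a m b : R) : 0 <= a -> 0 <= m -> 0 <= b ->
  0 < fG a m b (2 * (a + m + b)).
Proof.
move=> ha hm hb.
have -> : fG a m b (2 * (a + m + b)) = 2 +
  a * (4*a^+2 + 12*a* m + 10*a*b + 10*a + 12* m^+2 + 15* m*b + 20* m + 6*b^+2 + 19*b + 8)
  + m * (4* m^+2 + 4* m*b + 10* m + 16*b + 8) + b * (8*b + 8).
  rewrite /fG /cub; ring.
have h1 : 0 <= a * (4*a^+2 + 12*a* m + 10*a*b + 10*a + 12* m^+2 + 15* m*b + 20* m + 6*b^+2 + 19*b + 8).
  apply: mulr_ge0 => //; nra.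
have h2 : 0 <= m * (4* m^+2 + 4* m*b + 10* m + 16*b + 8) by apply: mulr_ge0 => //; nra.
have h3 : 0 <= b * (8*b + 8) by apply: mulr_ge0 => //; nra.
lra.
Qed.

Lemma lambda1_eq (R : realType) N (M : 'M[R]_N) x : eigenvalue M x ->
  (forall e, eigenvalue M e -> e <= x) -> lambda1 M = x.
Proof.
move=> hx hle; apply/le_anti/andP; split.
  by apply: ge_sup; [exists x | move=> e he; exact: hle].
apply: sup_upper_bound => //; split; first by exists x.
by exists x => e he; exact: hle.
Qed.

Lemma lambda1_ge (R : realType) N (M : 'M[R]_N) x B : eigenvalue M x ->
  (forall e, eigenvalue M e -> e <= B) -> x <= lambda1 M.
Proof.
move=> hx hle; apply: sup_upper_bound => //; split; first by exists x.
by exists B => e he; exact: hle.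
Qed.

Lemma G1 (R : realType) (K N : R) : 1 <= K -> 4 + 9 * K^+2 + 9 * K <= 2 * K * N ->
  2*K^+2*N + K^+2 - 3*K*N^+2 + K*N + 2*K + N^+2 + 3*N + 2 < 0.
Proof.
move=> hK hN.
have hN1 : 9 <= N by nra.
nra.
Qed.

Lemma gNpos (R : realType) (K N S : R) : 1 <= K -> (2 = S \/ 3 <= S) -> S + S * K + 1 <= N ->
  4 + 9 * K^+2 + 9 * K <= 2 * K * N ->
  0 < 3*N^+2 - (2*K*S + 2*K + 4*S + 1) * N + K*S^+2 - K*S - K + S^+2 - 2*S - 2.
Proof.
move=> hK hS hSN hN.
have hN1 : 9 <= N by nra.
have hN2 : 2 * K + 4 <= N.
  rewrite leNgt; apply/negP => h.
  have : 2 * K * N < 2 * K * (2 * K + 4) by rewrite ltr_pM2l //; lra.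
  nra.
set e := N - S * (K + 1) - 1.
have he : 0 <= e by rewrite /e; lra.
have -> : 3*N^+2 - (2*K*S + 2*K + 4*S + 1) * N + K*S^+2 - K*S - K + S^+2 - 2*S - 2
  = 3*e^+2 + e*(4*K*S - 2*K + 2*S + 5) + K^+2 * S * (S - 2) + K*S^+2 - 3*K - S.
  rewrite /e; ring.
case: hS => [hS2|hS].
  have he2 : 1 <= e by rewrite /e -hS2; lra.
  rewrite -hS2.
  nra.
have h1 : 0 <= e*(4*K*S - 2*K + 2*S + 5).
  apply: mulr_ge0 => //; nra.
have h2 : 0 <= K^+2 * S * (S - 2).
  apply: mulr_ge0; last lra; apply: mulr_ge0; [apply: sqr_ge0|lra].
have h3 : 0 <= (K - 1) * (S^+2 - 3) by apply: mulr_ge0; nra.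
have h4 : 0 <= 3 * e^+2 by apply: mulr_ge0; [lra|apply: sqr_ge0].
nra.
Qed.

Lemma G4 (R : realType) (K N S x : R) : 1 <= K -> (2 = S \/ 3 <= S) -> S + S * K + 1 <= N ->
  4 + 9 * K^+2 + 9 * K <= 2 * K * N -> N <= x ->
  0 < x^+2 + (2*N - 2*K*(S+1) - 3*S - 2) * x + K*(S^+2 - S - 1) + S^+2 - 2*S - 2 - N*(S-1).
Proof.
move=> hK hS hSN hN hx.
have hN1 : 9 <= N by nra.
have gN := @gNpos _ _ _ _ hK hS hSN hN.
have hS2 : 2 <= S by case: hS => [<-|]; lra.
have hc : 0 <= x + N + (2*N - 2*K*(S+1) - 3*S - 2) by nra.
have hd : 0 <= (x - N) * (x + N + (2*N - 2*K*(S+1) - 3*S - 2)) by nra.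
nra.
Qed.

Lemma fG_ivt (R : realType) (a m b lo hi : R) : lo <= hi ->
  fG a m b lo < 0 -> 0 < fG a m b hi ->
  exists x, [/\ lo < x, x < hi & fG a m b x = 0].
Proof. exact: cub_ivt. Qed.


Lemma natfacts k j n s : (0 < k)%N -> (2 <= s)%N -> (k <= j)%N -> (s + j + 1 <= n)%N ->
  [/\ (0 < n - 1 - k)%N, (2 < 1 + (n - 1 - k + k))%N, (2 < s + (n - s - j + j))%N,
      (0 < n - s - j)%N & [/\ (1 <= n)%N, (k <= n - 1)%N, (s <= n)%N & (j <= n - s)%N]].
Proof. move=> *; split; try split; lia. Qed.

Theorem mainTheorem7 (R : realType) (t : R) (k j n s : nat)
  (ht : 0 < t) (hk0 : (0 < k)%N) (hk : t^-1 = k%:R)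
  (hn : 2 * t + 9 / (2 * t) + 9 / 2 <= n%:R)
  (hs : (2 <= s)%N) (hj : s%:R / t = j%:R)
  (hns : (s + j + 1 <= n)%N) :
  lambda1 (distmx R (Gamb 1%N (n - 1 - k)%N k))
  < lambda1 (distmx R (Gamb s (n - s - j)%N j)).
Proof.
have hK1 : 1 <= (k%:R : R) by rewrite ler1n.
have hK0 : (k%:R : R) != 0 by rewrite pnatr_eq0 -lt0n.
have htK : t = (k%:R)^-1 by rewrite -hk invrK.
have hJ : (j%:R : R) = s%:R * k%:R by rewrite -hj -hk.
have hjk : j = (s * k)%N by apply/eqP; rewrite -(eqr_nat R) natrM hJ.
have hkj : (k <= j)%N by rewrite hjk leq_pmull // (leq_trans _ hs).
have [nf1 nf2 nf3 nf4 [nb1 nb2 nb3 nb4]] := @natfacts k j n s hk0 hs hkj hns.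
have hN : 4 + 9 * (k%:R : R)^+2 + 9 * k%:R <= 2 * k%:R * n%:R.
  have e : 2 * k%:R * n%:R - (4 + 9 * (k%:R : R)^+2 + 9 * k%:R)
     = 2 * k%:R * (n%:R - (2 * t + 9 / (2 * t) + 9 / 2)).
    rewrite htK; field; exact: hK0.
  rewrite -subr_ge0 e; apply: mulr_ge0; first by apply: mulr_ge0 => //; lra.
  by rewrite subr_ge0.
have hSN : (s%:R : R) + s%:R * k%:R + 1 <= n%:R.
  by move: hns; rewrite -(ler_nat R) !natrD hJ...
have hS : 2 = (s%:R : R) \/ 3 <= (s%:R : R).
  case: (ltngtP s 2) => h; first by move: hs; rewrite leqNgt h.
    by right; rewrite (ler_nat R 3 s).
  by left; rewrite h.
have hS2 : 2 <= (s%:R : R) by case: hS => [<-|]; lra.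
set K := (k%:R : R) in hK1 hK0 hJ hN hSN hS hS2 *.
set S := (s%:R : R) in hJ hSN hS hS2 *.
set N := (n%:R : R) in hN hSN *.
have hN9 : 9 <= N.
  rewrite leNgt; apply/negP => h.
  have : 2 * K * N < 2 * K * 9 by rewrite ltr_pM2l //; lra.
  nra.
have hN2 : 2 * K + 4 <= N.
  rewrite leNgt; apply/negP => h.
  have : 2 * K * N < 2 * K * (2 * K + 4) by rewrite ltr_pM2l //; lra.
  nra.
have cA : ((n - 1 - k)%N%:R : R) = N - 1 - K.
  by rewrite natrB // natrB.
have cB : ((n - s - j)%N%:R : R) = N - S - j%:R.
  by rewrite natrB // natrB.
have f1N : fG 1 (N - 1 - K) K N < 0.
  have -> : fG 1 (N - 1 - K) K N =
    2*K^+2*N + K^+2 - 3*K*N^+2 + K*N + 2*K + N^+2 + 3*N + 2 by rewrite /fG /cub; ring.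
  exact: G1.
have f12N : 0 < fG 1 (N - 1 - K) K (2 * N).
  have := @fG_2N R 1 (N - 1 - K) K ler01 _ _.
  have -> : 1 + (N - 1 - K) + K = N by ring.
  by apply; lra.
have [r1 [r1a r1b r1f]] := @fG_ivt R 1 (N - 1 - K) K N (2 * N) ltac:(lra) f1N f12N.
have lamA : lambda1 (distmx R (Gamb 1%N (n - 1 - k)%N k)) = r1.
  apply: lambda1_eq.
    apply: eig_root.
    - by [].
    - exact: nf1.
    - exact: nf2.
    - lra.
    - rewrite cA; exact: r1f.
  apply: eig_le.
  - by [].
  - exact: nf2.
  - rewrite cA; exact: r1f.
  - rewrite cA /XG.
    have p1 : 0 <= K * (r1 - N + K) by apply: mulr_ge0; lra.
    have p2 : 0 <= r1 * (r1 - 2*K) by apply: mulr_ge0; lra.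
    have -> : (r1 + 1) * (r1 + 2) - K * (r1 + (N - 1 - K) + 1) =
      r1 * (r1 - 2*K) + K * (r1 - N + K) + 3 * r1 + 2 by ring.
    lra.
  - rewrite /YG; apply: mulr_gt0; lra.
  - rewrite cA /ZG; apply: mulr_gt0; lra.
have f2r1 : fG S (N - S - S * K) (S * K) r1 < 0.
  have gpos := @G4 R K N S r1 hK1 hS hSN hN ltac:(lra).
  have e : fG S (N - S - S * K) (S * K) r1 = fG 1 (N - 1 - K) K r1 -
    K * (S - 1) * (r1^+2 + (2*N - 2*K*(S+1) - 3*S - 2) * r1 + K*(S^+2 - S - 1) + S^+2 - 2*S - 2 - N*(S-1)).
    rewrite /fG /cub; ring.
  rewrite e r1f sub0r oppr_lt0; apply: mulr_gt0; last exact: gpos.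
  apply: mulr_gt0; lra.
have f22N : 0 < fG S (N - S - S * K) (S * K) (2 * N).
  have hSK : 0 <= S * K by apply: mulr_ge0; lra.
  have := @fG_2N R S (N - S - S * K) (S * K) ltac:(lra) ltac:(lra) hSK.
  have -> : S + (N - S - S * K) + S * K = N by ring.
  done.
have [r2 [r2a r2b r2f]] := @fG_ivt R _ _ _ r1 (2 * N) ltac:(lra) f2r1 f22N.
have lamB : r2 <= lambda1 (distmx R (Gamb s (n - s - j)%N j)).
  apply: lambda1_ge; last by move=> e; apply: eig_bnd.
  apply: eig_root.
  - exact: (leq_trans _ hs).
  - exact: nf4.
  - exact: nf3.
  - lra.
  - rewrite cB hJ; exact: r2f.
rewrite lamA; exact: (lt_le_trans r2a lamB).
Qed.
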